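(* Let $p$ be a prime, $k\ge 1$, and $G=\mathbb{Z}_{p^k}$. Then: (i) there is a deterministic query algorithm that, for every finite set $X$ and every function $f:G\to X$ hiding a subgroup $H\le G$, makes exactly $2$ queries and correctly decides whether $H$ is trivial; (ii) there is a deterministic query algorithm that, for every finite set $X$ and every function $f:G\to X$ hiding a subgroup $H\le G$, outputs $H$ and makes at most $2+\log_p\frac{|G|}{|H|}$ queries, i.e. $O\!\left(1+\log\frac{|G|}{|H|}\right)$ queries.
   Context: Hidden subgroup problem ($\mathsf{HSP}$): $G$ is a finite group (known to the algorithm), $X$ a finite set, and $f:G\to X$ is an unknown function with the promise that there is a subgroup $H\le G$ such that for all $g_1,g_2\in G$, $f(g_1)=f(g_2)$ iff $g_1H=g_2H$; we say $f$ hides $H$. The identification version asks to output $H$; the decision version asks whether $H$ is the trivial group $\{e\}$. A deterministic query algorithm accesses $f$ only by adaptively choosing elements $g\in G$ and receiving $f(g)$ (a query); its query complexity on $f$ is the number of queries made. $\mathbb{Z}_{p^k}$ is the additive group of integers modulo $p^k$. *)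

(* Defs.v *)
From mathcomp Require Import all_boot all_fingroup all_algebra.
Set Implicit Arguments. Unset Strict Implicit. Unset Printing Implicit Defensive.

(* A deterministic adaptive query algorithm (decision tree) with queries in G,
   answers in X and output in R. *)
Inductive qtree (G X R : Type) : Type :=
  | Ret of R
  | Query of G & (X -> qtree G X R).
Arguments Ret {G X R} _.
Arguments Query {G X R} _ _.

Fixpoint run (G X R : Type) (f : G -> X) (t : qtree G X R) : R * nat :=
  match t with
  | Ret r => (r, 0%N)
  | Query g k => let: (r, n) := run f (k (f g)) in (r, n.+1)
  end.

(* An algorithm for HSP must work uniformly for every answer set X; we model it
   as a term polymorphic in X : eqType, so it can only compare answers for
   equality (it cannot inspect X, e.g. its cardinality). *)
Definition query_alg (G R : Type) := forall X : eqType, qtree G X R.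

Definition hides (gT : finGroupType) (X : Type) (f : gT -> X) (H : {set gT}) :=
  forall g1 g2 : gT, f g1 = f g2 <-> (g1 *: H)%g = (g2 *: H)%g.

(* Main.v *)
Require Import Defs.
From mathcomp Require Import all_boot all_fingroup all_algebra all_solvable.
From mathcomp Require Import zify.
Set Implicit Arguments. Unset Strict Implicit. Unset Printing Implicit Defensive.
Definition yy (gT : finGroupType) (g : gT) p i : gT := (g ^+ (p ^ i))%g.

Lemma ord_y (gT : finGroupType) (g : gT) p k i : prime p -> #[g]%g = p ^ k -> i <= k ->
  #[yy g p i]%g = p ^ (k - i).
Proof.
move=> hp og ik; have p0 : 0 < p by apply: prime_gt0.
rewrite /yy orderXdiv og ?dvdn_exp2l // expnB //.
Qed.

Lemma key (gT : finGroupType) (g : gT) p k (H : {group gT}) j :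
  prime p -> [set: gT] = <[g]>%g -> #[g]%g = p ^ k -> j <= k ->
  yy g p j \in H -> (forall l, yy g p l \in H -> j <= l) ->
  H :=: <[yy g p j]>%g /\ #|H| = p ^ (k - j).
Proof.
move=> hp hg og jk yj jmin.
have p1 : 1 < p by apply: prime_gt1.
have cyc : cyclic [set: gT] by rewrite hg cycle_cyclic.
have : #|H| %| p ^ k by rewrite -og orderE -hg cardSg ?subsetT.
case/(dvdn_pfactor _ _ hp) => m mk Hm.
have sub : <[yy g p (k - m)]>%g \subset H.
  rewrite -(cardSg_cyclic cyc) ?subsetT // -orderE (ord_y hp og) ?leq_subr //.
  by rewrite Hm subKn.
have jle : j <= k - m by apply: jmin; rewrite -cycle_subG.
have sub2 : <[yy g p j]>%g \subset H by rewrite cycle_subG.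
have : p ^ (k - j) %| p ^ m.
  by rewrite -Hm -(ord_y hp og) // orderE cardSg.
rewrite dvdn_Pexp2l // => kjm.
have ej : j = k - m.
  apply/eqP; rewrite eqn_leq jle /=.
  by rewrite leq_subLR addnC -leq_subLR.
have cH : #|H| = p ^ (k - j) by rewrite Hm ej subKn.
split=> //; apply/eqP.
by rewrite (eq_subG_cyclic cyc) ?subsetT // -orderE (ord_y hp og) // cH.
Qed.

Lemma hides_mem (gT : finGroupType) (X : Type) (f : gT -> X) (H : {group gT}) y :
  hides f H -> (f y = f 1%g) <-> y \in H.
Proof.
move=> hf; split.
  by move/hf/lcoset_eqP; rewrite mem_lcoset invg1 mul1g.
by move=> yH; apply/hf/lcoset_eqP; rewrite mem_lcoset invg1 mul1g.
Qed.

Fixpoint aux (gT : finGroupType) (g : gT) p (X : eqType) (a : X) (i n : nat)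
  : qtree gT X {set gT} :=
  match n with
  | 0 => Ret <[yy g p i]>%g
  | n'.+1 => Query (yy g p i) (fun b => if b == a then Ret <[yy g p i]>%g
                                        else aux g p a i.+1 n')
  end.

Lemma run_aux (gT : finGroupType) (g : gT) p (X : eqType) (f : gT -> X)
   (H : {group gT}) j k :
  hides f H -> yy g p j \in H -> (forall l, yy g p l \in H -> j <= l) -> j <= k ->
  forall n i, i + n = k -> i <= j ->
  (run f (aux g p (f 1%g) i n)).1 = <[yy g p j]>%g /\
  (run f (aux g p (f 1%g) i n)).2 <= (j - i).+1.
Proof.
move=> hf yj jmin jk; elim=> [|n IH] i ikn ij /=.
  have -> : j = i by apply/eqP; rewrite eqn_leq ij andbT; rewrite addn0 in ikn; by rewrite ikn.
  by [].
case: eqP => [/(hides_mem _ hf) yi | nyi].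
  have -> : j = i by apply/eqP; rewrite eqn_leq ij jmin.
  by rewrite /= subnn.
have ij' : i < j.
  rewrite ltn_neqAle ij andbT; apply/eqP=> eij; apply: nyi.
  by apply/(hides_mem _ hf); rewrite eij.
have [] := IH i.+1 _ ij'; first by rewrite addSnnS.
case: (run _ _) => r c /= -> hc; split=> //.
  by apply: leq_trans hc _; rewrite subnS prednK ?subn_gt0.
Qed.

Lemma gen_main (gT : finGroupType) (g : gT) p k : prime p -> 1 <= k ->
  [set: gT] = <[g]>%g -> #[g]%g = p ^ k ->
  (exists A : query_alg gT bool,
     forall (X : finType) (f : gT -> X) (H : {group gT}),
       hides f H -> run f (A X) = ((H :==: 1)%g, 2%N))
  /\
  (exists A : query_alg gT {set gT},
     forall (X : finType) (f : gT -> X) (H : {group gT}),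
       hides f H ->
       (run f (A X)).1 = H /\
       ((run f (A X)).2 <= 2 + logn p (#|gT| %/ #|H|))%N).
Proof.
move=> hp k1 hg og.
have p1 : 1 < p by apply: prime_gt1.
have cyc : cyclic [set: gT] by rewrite hg cycle_cyclic.
have cardT : #|gT| = p ^ k by rewrite -cardsT hg -orderE.
have yk : yy g p k = 1%g by rewrite /yy -og expg_order.
have exj : forall H : {group gT}, exists j, [/\ yy g p j \in H,
    (forall l, yy g p l \in H -> j <= l) & j <= k].
  move=> H.
  have ex : exists l, yy g p l \in H by exists k; rewrite yk group1.
  case: (ex_minnP ex) => j yj jmin; exists j; split=> //.
  by apply: jmin; rewrite yk group1.
split.
  exists (fun X => Query 1%g (fun a => Query (yy g p k.-1) (fun b => Ret (a != b)))).
  move=> X f H hf /=; congr (_, _).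
  have -> : (f 1%g != f (yy g p k.-1)) = (yy g p k.-1 \notin H).
    by apply/negbLR; rewrite negbK; apply/eqP/idP=> [/esym/(hides_mem _ hf)|/(hides_mem _ hf)->].
  have [j [yj jmin jk]] := exj H.
  have [eH cH] := key hp hg og jk yj jmin.
  rewrite trivg_card1 cH.
  have km : k.-1 <= k by apply: leq_pred.
  case: (leqP k j) => kj.
    have ej : j = k by apply/eqP; rewrite eqn_leq jk.
    rewrite ej subnn eqxx /=; apply/negP=> yH.
    have := jmin _ yH; rewrite ej; case: (k) k1 => // n _; by rewrite ltnn.
  have -> : p ^ (k - j) == 1 = false.
    apply/negbTE; rewrite -(expn0 p) eqn_exp2l // subn_eq0 -ltnNge //.
  apply/negbTE; rewrite negbK.
  rewrite eH -cycle_subG -(cardSg_cyclic cyc) ?subsetT // -!orderE !(ord_y hp og) //.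
  rewrite dvdn_Pexp2l //; lia.
exists (fun X => Query 1%g (fun a => aux g p a 0 k)).
move=> X f H hf.
have [j [yj jmin jk]] := exj H.
have [eH cH] := key hp hg og jk yj jmin.
have := run_aux hf yj jmin jk (add0n k) (leq0n j).
rewrite /=; case: (run _ _) => r c /= [-> hc]; split; first by rewrite eH.
rewrite cardT cH -expnB ?leq_subr ?prime_gt0 // (_ : k - (k - j) = j); last lia.
rewrite pfactorK //.
by rewrite add2n ltnS; rewrite subn0 in hc.
Qed.

Unset Implicit Arguments.
Theorem theorem1 (p k : nat) (hp : prime p) (hk : (1 <= k)%N) :
  (exists A : query_alg 'Z_(p ^ k) bool,
     forall (X : finType) (f : 'Z_(p ^ k) -> X) (H : {group 'Z_(p ^ k)}),
       hides f H -> run f (A X) = ((H :==: 1)%g, 2%N))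
  /\
  (exists A : query_alg 'Z_(p ^ k) {set 'Z_(p ^ k)},
     forall (X : finType) (f : 'Z_(p ^ k) -> X) (H : {group 'Z_(p ^ k)}),
       hides f H ->
       (run f (A X)).1 = H /\
       ((run f (A X)).2 <= 2 + logn p (#|'Z_(p ^ k)| %/ #|H|))%N).
Proof.
have pk1 : 1 < p ^ k.
  by rewrite -(expn0 p) ltn_exp2l ?prime_gt1.
apply: (@gen_main _ Zp1 p k hp hk).
  exact: Zp_cycle.
by rewrite order_Zp1 Zp_cast.
Qed.
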